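(* Let $\mathcal{X}$ be a finite set of actions, $\mathcal{Y}$ a finite set of responses, $\mathcal{H}\subseteq\mathcal{Y}^{\mathcal{X}}$, $\mathrm{cost}:\mathcal{X}\times\mathcal{Y}\to\mathbb{R}_+$. Let $f:2^{\mathcal{X}\times\mathcal{Y}}\to\mathbb{R}_+$ and $Q>0$, and suppose $f$ is submodular and $f(\emptyset)=0$. If $\mathrm{OPT}<\phi_{\min}$, then $\max_{x\in\mathcal{X}}u^f(x,\emptyset)\ge Q/\mathrm{OPT}$.
   Context: The true state is an unknown $h^*\in\mathcal{H}$. An interactive algorithm, given the observed set $S$ of action-response pairs, either selects an action $x$ (observing $(x,h^*(x))$) or terminates; $S^h[\mathcal{A}]$ is the set collected until termination when $h^*=h$; $\mathrm{cost}(\mathcal{A})=\max_{h\in\mathcal{H}}\sum_{(x,y)\in S^h[\mathcal{A}]}\mathrm{cost}(x,y)$; $\mathrm{OPT}$ is the minimum of $\mathrm{cost}(\mathcal{A})$ over interactive algorithms with $f(S^h[\mathcal{A}])\ge Q$ for all $h\in\mathcal{H}$. Version space $V(S)=\{h\in\mathcal{H}\mid\forall(x,y)\in S,\ y=h(x)\}$; $\delta_g(z\mid A)=g(A\cup\{z\})-g(A)$; $u^f(x,S)=\min_{h\in V(S)}\frac{\delta_{\min(f,Q)}((x,h(x))\mid S)}{\mathrm{cost}(x,h(x))}$. $\phi(x)$ is the second-smallest value of the multiset $\{\mathrm{cost}(x,y)\mid y\in\mathcal{Y}\}$ and $\phi_{\min}=\min_{x\in\mathcal{X}}\phi(x)$.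 *)

(* Defs.v *)
From mathcomp Require Import all_boot all_order all_algebra.
Set Implicit Arguments. Unset Strict Implicit. Unset Printing Implicit Defensive.
Import Order.TTheory GRing.Theory Num.Theory.
Local Open Scope ring_scope.

Section Defs.
Variables (R : realFieldType) (X Y : finType).

Notation obs := {set (X * Y)}.

Definition submodular (f : obs -> R) : Prop :=
  forall A B : obs, f (A :|: B) + f (A :&: B) <= f A + f B.

Definition vspace (H : {set {ffun X -> Y}}) (S : obs) : {set {ffun X -> Y}} :=
  [set h in H | [forall p in S, p.2 == h p.1]].

Definition delta (g : obs -> R) (z : X * Y) (A : obs) : R := g (z |: A) - g A.

Definition truncf (f : obs -> R) (Q : R) : obs -> R := fun S => Num.min (f S) Q.

(* minimum of F over the finite set A (arbitrary value 0 if A is empty) *)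
Definition setmin (T : finType) (A : {set T}) (F : T -> R) : R :=
  if [pick t in A] is Some t0 then \big[Num.min/F t0]_(t in A) F t else 0.

Definition uf (H : {set {ffun X -> Y}}) (cost : X * Y -> R) (f : obs -> R) (Q : R)
    (x : X) (S : obs) : R :=
  setmin (vspace H S) (fun h => delta (truncf f Q) (x, h x) S / cost (x, h x)).

Definition phi (cost : X * Y -> R) (x : X) : R :=
  nth 0 (sort <=%R [seq cost (x, y) | y <- enum Y]) 1.

Definition phi_min (cost : X * Y -> R) : R := setmin [set: X] (phi cost).

(* An interactive algorithm: given the observed set S, select Some action or
   terminate (None). *)
Definition ialg := obs -> option X.

Fixpoint run (A : ialg) (h : {ffun X -> Y}) (n : nat) : obs :=
  match n with
  | 0 => set0
  | n.+1 => let S := run A h n in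
            match A S with Some x => (x, h x) |: S | None => S end
  end.

(* A run that terminates at all terminates within #|X * Y| rounds (each
   non-final round adds a new pair, otherwise the run loops forever), and once
   terminated the state stays constant; so this is S^h[A]. *)
Definition Sfinal (A : ialg) (h : {ffun X -> Y}) : obs := run A h #|{: X * Y}|.

Definition terminates (A : ialg) (h : {ffun X -> Y}) : Prop :=
  exists n, A (run A h n) = None.

Definition costS (cost : X * Y -> R) (S : obs) : R := \sum_(p in S) cost p.

(* cost(A) = max_{h in H} cost of S^h[A] (costs are nonnegative and H nonempty) *)
Definition costA (H : {set {ffun X -> Y}}) (cost : X * Y -> R) (A : ialg) : R :=
  \big[Num.max/0]_(h in H) costS cost (Sfinal A h).

Definition feasible (H : {set {ffun X -> Y}}) (f : obs -> R) (Q : R) (A : ialg) : Prop :=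
  forall h, h \in H -> terminates A h /\ Q <= f (Sfinal A h).

Definition is_OPT (H : {set {ffun X -> Y}}) (cost : X * Y -> R) (f : obs -> R)
    (Q : R) (OPT : R) : Prop :=
  (exists A, feasible H f Q A /\ costA H cost A = OPT) /\
  (forall A, feasible H f Q A -> OPT <= costA H cost A).

End Defs.

(* Main.v *)
Require Import Defs.
From mathcomp Require Import all_boot all_order all_algebra.
Import Order.TTheory GRing.Theory Num.Theory.
Local Open Scope ring_scope.

Section Aux.
Set Implicit Arguments. Unset Strict Implicit.
Variables (R : realFieldType) (X Y : finType).

Lemma setmin_le (T : finType) (A : {set T}) (F : T -> R) x :
  x \in A -> setmin A F <= F x.
Proof.
move=> xA; rewrite /setmin; case: pickP => [t0 _|/(_ x)]; last by rewrite xA.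
exact: bigmin_le_cond.
Qed.

Lemma le_setmin (T : finType) (A : {set T}) (F : T -> R) c :
  A != set0 -> (forall t, t \in A -> c <= F t) -> c <= setmin A F.
Proof.
move=> /set0Pn [x xA] H; rewrite /setmin; case: pickP => [t0 t0A|/(_ x)]; last by rewrite xA.
apply/bigmin_geP; split; [exact: H | exact: H].
Qed.

Lemma run_mono (A : ialg X Y) h m n : (m <= n)%N -> run A h m \subset run A h n.
Proof.
elim: n => [|n IH]; first by rewrite leqn0 => /eqP ->.
rewrite leq_eqVlt => /orP [/eqP -> //| ltm].
apply: subset_trans (IH ltm) _ => /=.
by case: (A _) => // x; apply: subsetUr.
Qed.

Lemma run_form (A : ialg X Y) h n p : p \in run A h n -> p.2 = h p.1.
Proof.
elim: n => [|n IH] /=; first by rewrite inE.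
case: (A _) => [x|//]; rewrite in_setU1 => /orP [/eqP -> //|]; exact: IH.
Qed.

Lemma cost_le_costS {cost : X * Y -> R} {S : {set X * Y}} {p} :
  (forall q, 0 < cost q) -> p \in S -> cost p <= costS cost S.
Proof.
move=> cpos pS; rewrite /costS (bigD1 p) //= lerDl.
by apply: sumr_ge0 => q _; apply: ltW.
Qed.

Lemma phi_two (cost : X * Y -> R) x y1 y2 :
  y1 != y2 -> cost (x, y1) < phi cost x -> cost (x, y2) < phi cost x -> False.
Proof.
move=> ny c1 c2.
set s := [seq cost (x, y) | y <- enum Y].
set t := sort <=%R s.
have hc : (count (fun c : R => (c < phi cost x)%R) t <= 1)%N.
  rewrite /phi -/s -/t.
  have st : sorted <=%R t by apply: sort_sorted => a b; exact: le_total.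
  move: st; case: t => [|a [|b r]] //=.
  by move=> _; case: (_ < _).
  move=> /andP [_ pbr].
  have : all (<=%R b) r by apply: order_path_min => //; exact: le_trans.
  rewrite ltxx add0n => ar.
  have -> : count (fun c : R => (c < b)%R) r = 0%N.
    apply/eqP; rewrite -leqn0 leqNgt -has_count; apply/hasPn => c cr.
    by rewrite -leNgt; move/allP: ar => /(_ c cr).
  by case: (a < b).
have : (2 <= count (fun c : R => (c < phi cost x)%R) s)%N.
  rewrite /s count_map.
  have u := enum_uniq Y.
  have y1e : y1 \in enum Y by rewrite mem_enum.
  have y2r : y2 \in rem y1 (enum Y) by rewrite (mem_rem_uniq _ u) inE eq_sym ny mem_enum.
  rewrite ((permP (perm_to_rem y1e)) _) /= /preim /= c1 add1n ltnS -has_count.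
  by apply/hasP; exists y2.
have : perm_eq t s by rewrite /t perm_sort.
move/permP=> <- h2.
by have := leq_trans h2 hc.
Qed.

Lemma trunc_subadd (f : {set X * Y} -> R) Q :
  0 < Q -> (forall S, 0 <= f S) -> submodular f ->
  forall A B, truncf f Q (A :|: B) <= truncf f Q A + truncf f Q B.
Proof.
move=> Qp fp sub A B; rewrite /truncf.
have gA : 0 <= Num.min (f A) Q by rewrite le_min fp ltW.
have gB : 0 <= Num.min (f B) Q by rewrite le_min fp ltW.
have [hA|hA] := leP Q (f A).
  apply: le_trans (_ : _ <= Q) _; first by rewrite ge_min lexx orbT.
  by rewrite lerDl.
have [hB|hB] := leP Q (f B).
  apply: le_trans (_ : _ <= Q) _; first by rewrite ge_min lexx orbT.
  by rewrite lerDr.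
apply: le_trans (_ : _ <= f (A :|: B)) _; first by rewrite ge_min lexx.
apply: le_trans (sub A B); by rewrite lerDl.
Qed.

Lemma sum_bound (g : {set X * Y} -> R) :
  g set0 = 0 -> (forall A B, g (A :|: B) <= g A + g B) ->
  forall S, g S <= \sum_(p in S) g [set p].
Proof.
move=> g0 gs S; move: {2}#|S| (erefl #|S|) => n; elim: n S => [|n IH] S cS.
  by rewrite (cards0_eq cS) g0 big_set0.
have : (0 < #|S|)%N by rewrite cS.
move/card_gt0P => [x xS].
rewrite (big_setD1 x) //=.
rewrite -(setD1K xS); apply: le_trans (gs _ _) _.
rewrite setD1K // lerD2l; apply: IH.
by move: cS; rewrite (cardsD1 x) xS add1n => -[].
Qed.
End Aux.
Theorem lemma5 (R : realFieldType) (X Y : finType)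
    (H : {set {ffun X -> Y}}) (cost : X * Y -> R) (f : {set (X * Y)} -> R)
    (Q OPT : R) :
  H != set0 ->
  (forall p, 0 < cost p) ->
  (forall S, 0 <= f S) ->
  0 < Q ->
  submodular f ->
  f set0 = 0 ->
  is_OPT H cost f Q OPT ->
  OPT < phi_min cost ->
  exists x : X, Q / OPT <= uf H cost f Q x set0.
Proof.
move=> hH cpos fpos Qpos sub f0 [[A [feas cA]] _] hopt.
have [h0 h0H] := set0Pn _ hH.
set N := #|{: X * Y}|.
set S0 := Sfinal A h0.
have cS : forall h, h \in H -> costS cost (Sfinal A h) <= OPT.
  move=> h hh; rewrite -cA /costA; exact: (le_bigmax_cond _ (fun h => costS cost (Sfinal A h)) hh).
have cheap : forall h p, h \in H -> p \in Sfinal A h -> cost p < phi cost p.1.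
  move=> h p hh pS; have := cost_le_costS cpos pS; move=> hp. apply: (le_lt_trans hp).
  apply: le_lt_trans (cS h hh) _; apply: lt_le_trans hopt _.
  by apply: setmin_le; rewrite inE.
have runeq : forall h, h \in H -> forall n, (n <= N)%N -> run A h n = run A h0 n.
  move=> h hh; elim=> [//|n IH] nN.
  have IH' := IH (ltnW nN).
  have m1 : forall g x, A (run A g n) = Some x -> (x, g x) \in Sfinal A g.
    move=> g x e; apply: (subsetP (run_mono A g nN)) => /=.
    by rewrite e setU11.
  rewrite /= IH'.
  case e: (A (run A h0 n)) => [x|//].
  suff -> : h x = h0 x by [].
  apply/eqP; apply/negPn/negP => ne.
  apply: (phi_two ne).
    by apply: (cheap h _ hh); apply: m1; rewrite IH'.
  exact: (cheap h0 _ h0H (m1 _ _ e)).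
have Seq : forall h, h \in H -> Sfinal A h = S0.
  by move=> h hh; apply: runeq.
have fS0 : Q <= f S0 by case: (feas h0 h0H).
set g := truncf f Q.
have gS0 : g S0 = Q by rewrite /g /truncf (min_r fS0).
have g0 : g set0 = 0 by rewrite /g /truncf f0 (min_l (ltW Qpos)).
have sumQ : Q <= \sum_(p in S0) g [set p].
  by rewrite -gS0; apply: sum_bound => //; exact: trunc_subadd.
have S0n : S0 != set0.
  apply/negP => /eqP e; move: fS0; rewrite e f0 => /(lt_le_trans Qpos); by rewrite ltxx.
have [p0 p0S] := set0Pn _ S0n.
set C := costS cost S0.
have Cpos : 0 < C by apply: lt_le_trans (cost_le_costS cpos p0S); exact: cpos.
have CO : C <= OPT by exact: cS.
have [p pS hp] : exists2 p, p \in S0 & Q / C * cost p <= g [set p].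
  case: (boolP [exists p in S0, Q / C * cost p <= g [set p]]).
    by move/exists_inP => [p pS hp]; exists p.
  move/exists_inP => nop0; exfalso.
  have nop : forall p, p \in S0 -> g [set p] < Q / C * cost p.
    move=> p pS; rewrite ltNge; apply/negP => hp.
    by apply: nop0; exists p.
  have : \sum_(p in S0) g [set p] < \sum_(p in S0) (Q / C * cost p).
    apply: ltr_sum; last exact: nop.
    by apply/hasP; exists p0; rewrite ?mem_index_enum.
  rewrite -mulr_sumr -/(costS cost S0) -/C mulfVK ?gt_eqF //.
  by rewrite ltNge sumQ.
exists p.1.
have p2 : p.2 = h0 p.1 by apply: run_form pS.
apply: le_setmin.
  by apply/set0Pn; exists h0; rewrite inE h0H; apply/forall_inP => q; rewrite inE.
move=> h; rewrite inE => /andP [hh _].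
have hx : h p.1 = p.2.
  by symmetry; apply: (run_form (A:=A) (h:=h) (n:=N)); rewrite -/(Sfinal A h) Seq.
rewrite hx /delta setU0 -/g g0 subr0 -surjective_pairing.
have cp : 0 < cost p by [].
apply: le_trans (_ : Q / C <= _).
  rewrite ler_pM2l //; rewrite lef_pV2 ?posrE //; exact: lt_le_trans CO.
by rewrite ler_pdivlMr.
Qed.
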